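(* For any finite simple graph $X$, the mixed extended threshold GCA map $\mathbf{F}^\updownarrow$ has no periodic orbits of length $\ge 3$.
   Context: Let $X$ be a finite simple graph with vertices $1,\dots,n$; $d(v)$ is the degree of $v$ and $n[v]$ the closed neighborhood of $v$. An extended vertex state is $s_v=(x_v,k_v)\in\{0,1\}\times\{1,\dots,d(v)+1\}$; $\mathcal{S}$ is the product of these sets. Let $\sigma(x[v])=|\{u\in n[v]:x_u=1\}|$. The mixed vertex function maps $(x_v,k_v)$ to $(x_v',k_v')$ with $x_v'=1$ iff $\sigma(x[v])\ge k_v$ (else $0$), and $k_v'=k_v+1$ if $x_v=0$ and $\sigma(x[v])\ge k_v$; $k_v'=k_v-1$ if $x_v=1$ and $\sigma(x[v])<k_v$; $k_v'=k_v$ otherwise. The GCA map $\mathbf{F}^\updownarrow:\mathcal{S}\to\mathcal{S}$ applies this vertex function at all vertices simultaneously. A periodic orbit of length $m$ is a cycle of $m$ distinct states under iteration. *)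

(* Defs.v *)
From mathcomp Require Import all_boot.
Set Implicit Arguments. Unset Strict Implicit. Unset Printing Implicit Defensive.

Definition simple_graph (T : finType) (e : rel T) : Prop :=
  symmetric e /\ irreflexive e.

Definition deg (T : finType) (e : rel T) (v : T) : nat := #|[set u | e v u]|.

Definition cnbhd (T : finType) (e : rel T) (v : T) : {set T} :=
  [set u | (u == v) || e v u].

(* extended states s_v = (x_v, k_v); the product of all vertex states *)
Definition gstate (T : finType) := {ffun T -> bool * nat}.

Definition in_S (T : finType) (e : rel T) (s : gstate T) : bool :=
  [forall v, (1 <= (s v).2 <= deg e v + 1)%N].

Definition sigma (T : finType) (e : rel T) (s : gstate T) (v : T) : nat :=
  #|[set u in cnbhd e v | (s u).1]|.

Definition mixed_vertex_fun (T : finType) (e : rel T) (s : gstate T) (v : T)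
  : bool * nat :=
  let x := (s v).1 in
  let k := (s v).2 in
  let fire := (k <= sigma e s v)%N in
  (fire,
   if ~~ x && fire then k.+1
   else if x && ~~ fire then k.-1
   else k).

Definition F_mixed (T : finType) (e : rel T) (s : gstate T) : gstate T :=
  [ffun v => mixed_vertex_fun e s v].

Definition periodic_orbit (T : finType) (f : gstate T -> gstate T)
  (s : gstate T) (m : nat) : Prop :=
  (0 < m)%N /\ iter m f s = s /\ uniq [seq iter i f s | i <- iota 0 m].

(* Main.v *)
Require Import Defs.
From mathcomp Require Import all_boot zify.
Set Implicit Arguments. Unset Strict Implicit. Unset Printing Implicit Defensive.

Definition hh (T : finType) (e : rel T) (s : gstate T) (v : T) : nat :=
  \sum_u ((e v u && (s u).1) : nat).

Lemma sigmaE (T : finType) (e : rel T) s v : irreflexive e ->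
  sigma e s v = (s v).1 + hh e s v.
Proof.
move=> irr; rewrite /sigma /hh -sum1_card big_mkcond /=.
rewrite (eq_bigr (fun u => ((u == v) && (s u).1 : nat) + (e v u && (s u).1))); last first.
  move=> u _; rewrite !inE; case: eqP => [->|_] /=; rewrite ?irr; by case: (s _).1.
rewrite big_split /= (bigD1 v) //= eqxx big1 ?addn0 // => u /negbTE ->; by [].
Qed.

Lemma step1 (T : finType) (e : rel T) s v : irreflexive e ->
  (F_mixed e s v).1 = ((s v).2 <= (s v).1 + hh e s v) /\
  (F_mixed e s v).2 + (s v).1 = (s v).2 + (F_mixed e s v).1.
Proof.
move=> irr; rewrite ffunE /mixed_vertex_fun /= sigmaE //.
case: (s v).1 => /=; case: leqP => /= H; lia.
Qed.

Lemma keyineq (x1 x2 : bool) (a h b : nat) : x1 = (a <= h + b) ->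
  x2 * (2 * (h + b) + 1) + x1 * (2 * a) + (x1 != x2)
   <= x1 * (2 * (h + b) + 1) + x2 * (2 * a).
Proof. move=> ->; case: leqP; case: x2 => /=; lia. Qed.

Lemma shift1 (g : nat -> nat) m : g m = g 0 ->
  \sum_(0 <= t < m) g t.+1 = \sum_(0 <= t < m) g t.
Proof.
move=> H; have := @big_nat_recl nat 0 addn m 0 g (leq0n m).
rewrite big_nat_recr //= H addnC; lia.
Qed.

Definition XX (T : finType) (e : rel T) (s : gstate T) t v : bool := (iter t (F_mixed e) s v).1.
Definition KK (T : finType) (e : rel T) (s : gstate T) t v : nat := (iter t (F_mixed e) s v).2.
Definition HH (T : finType) (e : rel T) (s : gstate T) t v : nat :=
  \sum_u ((e v u && XX e s t u) : nat).
Definition BB (T : finType) (e : rel T) (s : gstate T) i j : nat :=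
  \sum_v XX e s i v * HH e s j v.

Lemma BBsym (T : finType) (e : rel T) s i j : symmetric e -> BB e s i j = BB e s j i.
Proof.
move=> sym; rewrite /BB /HH.
under eq_bigr do rewrite big_distrr.
under [RHS]eq_bigr do rewrite big_distrr.
rewrite exchange_big; apply eq_bigr => v _; apply eq_bigr => u _.
rewrite ?[e u v]sym; case: (XX e s i u); case: (XX e s j v); case: (e v u) => //=.
Qed.

Theorem proposition3p8 (T : finType) (e : rel T) :
  simple_graph e ->
  forall (s : gstate T) (m : nat),
    in_S e s -> periodic_orbit (F_mixed e) s m -> (m < 3)%N.
Proof.
move=> [sym irr] s m _ [m0 [per uq]].
have stepX t v : XX e s t.+1 v = (KK e s t v <= XX e s t v + HH e s t v).
  by rewrite /XX iterS; case: (step1 (iter t (F_mixed e) s) v irr).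
have stepK t v : KK e s t.+1 v + XX e s t v = KK e s t v + XX e s t.+1 v.
  by rewrite /XX /KK iterS; case: (step1 (iter t (F_mixed e) s) v irr).
have inv t v : KK e s t v + XX e s 0 v = KK e s 0 v + XX e s t v.
  elim: t => [|t IH]; first by rewrite addnC.
  have := stepK t v; lia.
have thr t v : XX e s t.+1 v = (KK e s 0 v <= HH e s t v + XX e s 0 v).
  rewrite stepX; have := inv t v; move=> I; apply/idP/idP => J; lia.
have perX t v : XX e s (t + m) v = XX e s t v by rewrite /XX iterD per.
have perH t v : HH e s (t + m) v = HH e s t v.
  by rewrite /HH; apply eq_bigr => u _; rewrite perX.
have perB i j : BB e s (i + m) (j + m) = BB e s i j.
  by rewrite /BB; apply eq_bigr => v _; rewrite perX perH.
pose a v := KK e s 0 v. pose b v := XX e s 0 v.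
pose G i := \sum_v XX e s i v * (2 * b v + 1).
pose Ha i := \sum_v XX e s i v * (2 * a v).
pose L t v := XX e s t.+2 v * (2 * (HH e s t.+1 v + b v) + 1) + XX e s t v * (2 * a v).
pose R t v := XX e s t v * (2 * (HH e s t.+1 v + b v) + 1) + XX e s t.+2 v * (2 * a v).
have ineq t v : R t v + (XX e s t.+2 v != XX e s t v) <= L t v.
  rewrite /R /L /a /b. have := keyineq (XX e s t v) (thr t.+1 v). lia.
have Lt t : \sum_v L t v = BB e s t.+2 t.+1 + BB e s t.+2 t.+1 + G t.+2 + Ha t.
  rewrite /BB /G /Ha -!big_split; apply eq_bigr => v _ /=.
  rewrite /L; case: (XX e s t.+2 v); case: (XX e s t v) => /=; lia.
have Rt t : \sum_v R t v = BB e s t.+1 t + BB e s t.+1 t + G t + Ha t.+2.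
  rewrite BBsym // /BB /G /Ha -!big_split; apply eq_bigr => v _ /=.
  rewrite /R; case: (XX e s t.+2 v); case: (XX e s t v) => /=; lia.
have perG i : G (i + m) = G i by rewrite /G; apply eq_bigr => v _; rewrite perX.
have perHa i : Ha (i + m) = Ha i by rewrite /Ha; apply eq_bigr => v _; rewrite perX.
have S1 : \sum_(0 <= t < m) BB e s t.+2 t.+1 = \sum_(0 <= t < m) BB e s t.+1 t.
  exact: (@shift1 (fun t => BB e s t.+1 t) m (perB 1 0)).
have S2 : \sum_(0 <= t < m) G t.+2 = \sum_(0 <= t < m) G t.
  exact: (etrans (@shift1 (fun t => G t.+1) m (perG 1)) (@shift1 G m (perG 0))).
have S3 : \sum_(0 <= t < m) Ha t.+2 = \sum_(0 <= t < m) Ha t.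
  exact: (etrans (@shift1 (fun t => Ha t.+1) m (perHa 1)) (@shift1 Ha m (perHa 0))).
have EQ : \sum_(0 <= t < m) \sum_v L t v = \sum_(0 <= t < m) \sum_v R t v.
  under eq_bigr do rewrite Lt. under [RHS]eq_bigr do rewrite Rt.
  rewrite !big_split /= S1 S2 S3; lia.
Show.
have LE : \sum_(0 <= t < m) \sum_v R t v +
   \sum_(0 <= t < m) \sum_v ((XX e s t.+2 v != XX e s t v) : nat)
   <= \sum_(0 <= t < m) \sum_v L t v.
  rewrite -big_split; apply leq_sum => t _; rewrite -big_split; apply leq_sum => v _.
  exact: ineq.
rewrite EQ in LE.
have Z : \sum_(0 <= t < m) \sum_v ((XX e s t.+2 v != XX e s t v) : nat) = 0 by lia.
case: m m0 per uq perX perH perB perG perHa S1 S2 S3 EQ LE Z => // m' _ per uq _ _ _ _ _ _ _ _ _ _ Z.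
rewrite big_nat_recl // in Z.
have Z0 : \sum_v ((XX e s 2 v != XX e s 0 v) : nat) == 0 by apply/eqP; lia.
move: Z0; rewrite sum_nat_eq0 => /forallP Z0.
have it2 : iter 2 (F_mixed e) s = s.
  apply/ffunP => v; have := Z0 v; rewrite eqb0 negbK => /eqP X2.
  have := inv 2 v; rewrite X2 => K2.
  rewrite [iter 2 _ s v]surjective_pairing [s v]surjective_pairing.
  congr (_, _); first exact: X2.
  by apply/eqP; rewrite -(eqn_add2r (XX e s 0 v)); apply/eqP; exact: K2.
rewrite ltnNge; apply/negP => m3.
case: m' m3 per uq it2 Z => [|[|m']] // _ _ uq it2 _.
move: uq; rewrite /=.
rewrite (_ : F_mixed e (F_mixed e s) = s) // !inE eqxx !orbT.
done.
Qed.
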